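(* Let $H$ be a non-transitive $k$-vertex tournament. If there exists an $s$-vertex tournament $S$ with $s>k$ such that $n(H,S)\ge s^k\cdot 2^{-\binom{k}{2}}$, then $H$ is not quasirandom-forcing.
   Context: A tournament is an orientation of a complete graph; $\mathrm{Aut}(H)$ is its automorphism group. $n(H,S)$ denotes the number of $k$-element vertex subsets of $S$ that induce a tournament isomorphic to $H$. For tournaments $H,G$, $d(H,G)$ is the probability that $\lvert H\rvert$ uniformly random distinct vertices of $G$ induce a tournament isomorphic to $H$ (and $0$ if $\lvert H\rvert>\lvert G\rvert$). A sequence $(G_n)$ of tournaments with $\lvert G_n\rvert\to\infty$ is quasirandom if $\lim_{n\to\infty} d(F,G_n)=\frac{m!}{\lvert\mathrm{Aut}(F)\rvert}2^{-\binom{m}{2}}$ for every tournament $F$ with $m$ vertices. A $k$-vertex tournament $H$ is quasirandom-forcing if every sequence $(G_n)$ of tournaments with $\lvert G_n\rvert\to\infty$ and $\lim_{n\to\infty} d(H,G_n)=\frac{k!}{\lvert\mathrm{Aut}(H)\rvert}2^{-\binom{k}{2}}$ is quasirandom. *)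

(* Defs.v *)
From mathcomp Require Import all_boot.
From mathcomp Require Import perm.
From Stdlib Require Import Reals.

Set Implicit Arguments.
Unset Strict Implicit.
Unset Printing Implicit Defensive.

Record tournament (n : nat) := Tournament {
  tadj : rel 'I_n;
  tadj_irr : forall i, ~~ tadj i i;
  tadj_tot : forall i j, i != j -> tadj i j = ~~ tadj j i
}.

Definition transitive_tournament (k : nat) (H : tournament k) : Prop :=
  forall i j l : 'I_k, tadj H i j -> tadj H j l -> tadj H i l.

Definition aut_card (k : nat) (H : tournament k) : nat :=
  #|[set f : {perm 'I_k} | [forall i, [forall j, tadj H (f i) (f j) == tadj H i j]]]|.

Definition ncopies (k s : nat) (H : tournament k) (S : tournament s) : nat :=
  #|[set A : {set 'I_s} |
      [exists f : {ffun 'I_k -> 'I_s},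
         [&& injectiveb f, f @: setT == A &
             [forall i, [forall j, tadj H i j == tadj S (f i) (f j)]]]]]|.

Definition density (k n : nat) (H : tournament k) (G : tournament n) : R :=
  if (n < k)%N then 0%R
  else (INR (ncopies H G) / INR 'C(n, k))%R.

(* expected random density m!/|Aut F| * 2^{-C(m,2)} *)
Definition random_density (m : nat) (F : tournament m) : R :=
  (INR (m`!) / INR (aut_card F) * / (2 ^ 'C(m, 2)))%R.

Definition nat_to_infty (N : nat -> nat) : Prop :=
  forall M : nat, exists n0 : nat, forall n : nat, (n0 <= n)%N -> (M <= N n)%N.

Definition quasirandom (N : nat -> nat) (G : forall n, tournament (N n)) : Prop :=
  forall (m : nat) (F : tournament m),
    Un_cv (fun n => density F (G n)) (random_density F).

Definition quasirandom_forcing (k : nat) (H : tournament k) : Prop :=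
  forall (N : nat -> nat) (G : forall n, tournament (N n)),
    nat_to_infty N ->
    Un_cv (fun n => density H (G n)) (random_density H) ->
    quasirandom G.

(* Main.v *)
Require Import Defs.
From mathcomp Require Import all_boot perm zify.
Set Implicit Arguments. Unset Strict Implicit. Unset Printing Implicit Defensive.

Definition copyset k N (H : tournament k) (G : tournament N) : {set {set 'I_N}} :=
  [set A : {set 'I_N} |
      [exists f : {ffun 'I_k -> 'I_N},
         [&& injectiveb f, f @: setT == A &
             [forall i, [forall j, tadj H i j == tadj G (f i) (f j)]]]]].

Lemma ncopiesE k N (H : tournament k) (G : tournament N) : ncopies H G = #|copyset H G|.
Proof. by []. Qed.

Lemma copysetP k N (H : tournament k) (G : tournament N) (A : {set 'I_N}) :
  reflect (exists f : {ffun 'I_k -> 'I_N}, [/\ injective f, f @: setT = A &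
             forall i j, tadj H i j = tadj G (f i) (f j)])
          (A \in copyset H G).
Proof.
rewrite inE; apply: (iffP existsP) => [[f /and3P[/injectiveP fi /eqP fA /forallP fa]]|[f [fi fA fa]]].
  by exists f; split=> // i j; move/forallP: (fa i) => /(_ j)/eqP.
exists f; apply/and3P; split; [exact/injectiveP| exact/eqP|].
by apply/forallP=> i; apply/forallP=> j; rewrite fa.
Qed.

Lemma copyset_card k N (H : tournament k) (G : tournament N) (A : {set 'I_N}) :
  A \in copyset H G -> #|A| = k.
Proof. by case/copysetP=> f [fi <- _]; rewrite card_imset // cardsT card_ord. Qed.

Lemma copyset_local k N (H : tournament k) (G1 G2 : tournament N) (A : {set 'I_N}) :
  {in A &, forall x y, tadj G1 x y = tadj G2 x y} ->
  (A \in copyset H G1) -> (A \in copyset H G2).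
Proof.
move=> loc /copysetP[f [fi fA fa]]; apply/copysetP; exists f; split=> // i j.
have fin x : f x \in A by rewrite -fA imset_f ?inE.
by rewrite fa loc ?fin.
Qed.

Lemma copyset_trans0 k N (H : tournament k) (G : tournament N) :
  ~ transitive_tournament H ->
  (forall x y, tadj G x y = (x < y)) -> copyset H G = set0.
Proof.
move=> nt Gt; apply/setP=> A; rewrite [in RHS]inE; apply/negP => /copysetP[f [_ _ fa]].
apply: nt => i j l; rewrite !fa !Gt; exact: ltn_trans.
Qed.

Lemma aut_card_gt0 k (H : tournament k) : 0 < aut_card H.
Proof.
rewrite /aut_card card_gt0; apply/set0Pn; exists 1%g; rewrite inE.
by apply/forallP=> i; apply/forallP=> j; rewrite !perm1.
Qed.

Section Blow.
Variables (s' n : nat) (S : tournament s'.+1).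
Local Notation s := s'.+1.
Local Notation N := (s * n).

Definition blow (u v : 'I_N) : bool :=
  if u %/ n == v %/ n then u < v else tadj S (inord (u %/ n)) (inord (v %/ n)).
Definition gadj t (u v : 'I_N) := (t <= v) || blow u v.
Definition adjT t (u v : 'I_N) :=
  if u < v then gadj t u v else if v < u then ~~ gadj t v u else false.
Lemma adjT_irr t i : ~~ adjT t i i.
Proof. by rewrite /adjT ltnn. Qed.
Lemma adjT_tot t i j : i != j -> adjT t i j = ~~ adjT t j i.
Proof.
move=> ne; rewrite /adjT; case: (ltngtP i j) => h //=; first by rewrite negbK.
by move: ne; rewrite (val_inj h) eqxx.
Qed.
Definition GT t : tournament N := Tournament (adjT_irr t) (adjT_tot t).

Lemma GT0 x y : tadj (GT 0) x y = (x < y).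
Proof. by rewrite /= /adjT /gadj; case: ltngtP. Qed.

Lemma GT_same t (x y : 'I_N) : x %/ n = y %/ n -> tadj (GT t) x y = (x < y).
Proof.
move=> e; rewrite /= /adjT /gadj /blow e eqxx; case: ltngtP => h //=; by rewrite orbT.
Qed.

Lemma part_lt (x : 'I_N) : x %/ n < s.
Proof. by rewrite ltn_divLR ?mulnC //; case: n x => [|m] [x /=]; rewrite ?muln0. Qed.

Lemma GT_diff t (x y : 'I_N) : N <= t -> x %/ n != y %/ n ->
  tadj (GT t) x y = tadj S (inord (x %/ n)) (inord (y %/ n)).
Proof.
move=> Nt ne.
have gE (u v : 'I_N) : u %/ n != v %/ n -> gadj t u v = tadj S (inord (u %/ n)) (inord (v %/ n)).
  move=> nuv; rewrite /gadj /blow (negbTE nuv).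
  have : v < t by apply: leq_trans (ltn_ord v) Nt.
  by rewrite ltnNge => /negbTE ->.
rewrite /= /adjT; case: ltngtP => h.
- by rewrite gE.
- rewrite gE 1?eq_sym // tadj_tot ?negbK //.
  apply/negP=> /eqP/(f_equal val); rewrite /= !inordK ?part_lt // => e.
  by rewrite e eqxx in ne.
- by move: ne; rewrite (val_inj h) eqxx.
Qed.

Lemma GT_step t (x y : 'I_N) : val x != t -> val y != t ->
  tadj (GT t) x y = tadj (GT t.+1) x y.
Proof.
move=> xt yt; rewrite /= /adjT /gadj.
have e (v : 'I_N) : val v != t -> (t <= v) = (t < v).
  by move=> vt; rewrite leq_eqVlt eq_sym (negbTE vt).
by rewrite !e.
Qed.
End Blow.

Lemma card_withv N k t :
  #|[set A : {set 'I_N} | (#|A| == k.+1) && [exists x in A, val x == t]]| <= 'C(N, k).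
Proof.
set D := [set A | _].
pose g (A : {set 'I_N}) := [set x in A | val x != t].
have gD A : A \in D -> exists2 y, y \in A & (val y == t) /\ g A = A :\ y.
  rewrite inE => /andP[_ /existsP[y /andP[yA yt]]]; exists y => //; split => //.
  apply/setP=> z; rewrite !inE; case: (z =P y) => [->|/eqP zy]; first by rewrite yt andbF.
  rewrite andbC; congr (_ && _); apply/negP => /eqP zt; move: zy.
  by rewrite -(inj_eq val_inj) zt (eqP yt) eqxx.
have ginj : {in D &, injective g}.
  move=> A B AD BD e; apply/setP=> z.
  case: (boolP (val z == t)) => zt.
  - have [y yA [yt _]] := gD _ AD; have [y' yB [yt' _]] := gD _ BD.
    have -> : z = y by apply: val_inj; rewrite (eqP zt) (eqP yt).
    have -> : y = y' by apply: val_inj; rewrite (eqP yt) (eqP yt').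
    by rewrite yB; have -> : y' = y by apply: val_inj; rewrite (eqP yt) (eqP yt').
  - have := congr1 (fun X : {set 'I_N} => z \in X) e; rewrite /g !inE zt !andbT; by [].
rewrite -(card_in_imset ginj) -[N in 'C(N, _)]card_ord -card_draws.
apply: subset_leq_card; apply/subsetP=> _ /imsetP[A AD ->]; rewrite inE.
have [y yA [_ ->]] := gD _ AD; move: AD; rewrite inE => /andP[/eqP cA _].
by move: cA; rewrite (cardsD1 y) yA add1n => [[->]].
Qed.

Lemma step_bound k N (H : tournament k.+1) (G1 G2 : tournament N) t :
  (forall x y : 'I_N, val x != t -> val y != t -> tadj G1 x y = tadj G2 x y) ->
  #|copyset H G2| <= #|copyset H G1| + 'C(N, k).
Proof.
move=> loc.
set D := [set A : {set 'I_N} | (#|A| == k.+1) && [exists x in A, val x == t]].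
apply: leq_trans (leq_add (leqnn _) (card_withv N k t)).
apply: leq_trans (_ : #|copyset H G1 :|: D| <= _); last by rewrite cardsU leq_subr.
apply: subset_leq_card; apply/subsetP=> A AC; rewrite inE.
case: (boolP [exists x in A, val x == t]) => ex.
  by rewrite [_ \in D]inE (copyset_card AC) eqxx ex orbT.
apply/orP; left; apply: copyset_local AC => x y xA yA.
have nt z : z \in A -> val z != t.
  by move=> zA; apply/negP=> zt; move/negP: ex; apply; apply/existsP; exists z; rewrite zA.
by rewrite loc ?nt.
Qed.

Section Count.
Variables (s' n : nat) (S : tournament s'.+1).
Local Notation s := s'.+1.
Local Notation N := (s * n).

Lemma vert_lt (a : 'I_s) (b : 'I_n) : a * n + b < N.
Proof. have := ltn_ord a; have := ltn_ord b; nia. Qed.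
Definition vert a b : 'I_N := Ordinal (vert_lt a b).

Lemma vert_part a b : val (vert a b) %/ n = a.
Proof.
rewrite /= divnMDl ?divn_small ?addn0 //; by case: n b => [[]|].
Qed.

Lemma vert_partI a b : (inord (val (vert a b) %/ n) : 'I_s) = a.
Proof. by rewrite vert_part inord_val. Qed.

Lemma vert_inj a b a' b' : vert a b = vert a' b' -> a = a' /\ b = b'.
Proof.
move=> e; have ea : a = a' by rewrite -(vert_partI a b) e vert_partI.
split=> //; subst a'; apply: val_inj; move/(f_equal val): e => /= /addnI //.
Qed.

Variables (k : nat) (H : tournament k).

Definition wit (A : {set 'I_s}) : {ffun 'I_k -> 'I_s} :=
  odflt [ffun=> ord0] [pick f : {ffun 'I_k -> 'I_s} | [&& injectiveb f, f @: setT == A &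
             [forall i, [forall j, tadj H i j == tadj S (f i) (f j)]]]].

Lemma witP A : A \in copyset H S ->
  [/\ injective (wit A), wit A @: setT = A & forall i j, tadj H i j = tadj S (wit A i) (wit A j)].
Proof.
rewrite /wit inE => /existsP ex; case: pickP => [f /= /and3P[/injectiveP fi /eqP fA /forallP fa]|none].
  by split=> // i j; move/forallP: (fa i) => /(_ j)/eqP.
by case: ex => f; rewrite none.
Qed.

Definition Phi (p : {set 'I_s} * {ffun 'I_k -> 'I_n}) : {set 'I_N} :=
  [set vert (wit p.1 i) (p.2 i) | i in [set: 'I_k]].

Lemma blow_count : #|copyset H S| * n ^ k <= #|copyset H (@GT s' n S N)|.
Proof.
have -> : #|copyset H S| * n ^ k = #|setX (copyset H S) [set: {ffun 'I_k -> 'I_n}]|.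
  by rewrite cardsX cardsT card_ffun !card_ord.
have Pinj : {in setX (copyset H S) [set: {ffun 'I_k -> 'I_n}] &, injective Phi}.
  move=> [A g] [A' g']; rewrite !in_setX /= !in_setT !andbT => AC A'C e.
  have [wi wA wa] := witP AC; have [wi' wA' wa'] := witP A'C.
  have pA B h (BC : B \in copyset H S) :
      [set (inord (val x %/ n) : 'I_s) | x in Phi (B, h)] = B.
    have [_ wB _] := witP BC; rewrite /Phi -imset_comp; apply: etrans wB; apply: eq_imset => i /=.
    exact: vert_partI.
  have eA : A = A' by rewrite -(pA A g AC) e pA.
  subst A'; congr (_, _); apply/ffunP => i.
  have : vert (wit A i) (g i) \in Phi (A, g') by rewrite -e /Phi; apply: imset_f; rewrite inE.
  case/imsetP => j _ /vert_inj /= [/wi ij]; by rewrite ij.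
rewrite -(card_in_imset Pinj); apply: subset_leq_card; apply/subsetP => _ /imsetP[[A g] pin ->].
move: pin; rewrite in_setX /= in_setT andbT => AC; have [wi wA wa] := witP AC.
apply/copysetP; exists [ffun i => vert (wit A i) (g i)]; split.
- by move=> i j; rewrite !ffunE => /vert_inj[/wi].
- by apply: eq_imset => i; rewrite ffunE.
move=> i j; rewrite !ffunE; case: (eqVneq i j) => [->|ne].
  by rewrite (negbTE (tadj_irr _ _)) (negbTE (tadj_irr _ _)).
rewrite GT_diff //; last by rewrite !vert_part (inj_eq val_inj) (inj_eq wi).
by rewrite !vert_partI wa.
Qed.
End Count.

Definition TTadj m (i j : 'I_m) := i < j.
Lemma TT_irr m (i : 'I_m) : ~~ TTadj i i. Proof. by rewrite /TTadj ltnn. Qed.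
Lemma TT_tot m (i j : 'I_m) : i != j -> TTadj i j = ~~ TTadj j i.
Proof.
move=> ne; rewrite /TTadj; case: ltngtP => // h.
by move: ne; rewrite (val_inj h) eqxx.
Qed.
Definition TT m : tournament m := Tournament (@TT_irr m) (@TT_tot m).

Lemma enum_sorted n (B : {set 'I_n}) : sorted (fun x y : 'I_n => val x < val y) (enum B).
Proof.
have -> : enum B = filter (mem B) (enum 'I_n) by rewrite enumT.
apply: sorted_filter; first by move=> x y z; apply: ltn_trans.
by rewrite -(sorted_map (f := val) (e' := ltn)) val_enum_ord iota_ltn_sorted.
Qed.

Lemma nth_ltE n (B : {set 'I_n}) w0 i j : i < size (enum B) -> j < size (enum B) ->
  (val (nth w0 (enum B) i) < val (nth w0 (enum B) j)) = (i < j).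
Proof.
move=> ii jj.
have hom := sorted_ltn_nth (leT := fun x y : 'I_n => val x < val y)
   (fun x y z => @ltn_trans _ _ _) w0 (enum_sorted B).
case: (ltngtP i j) => h.
- by apply: hom.
- apply/negbTE; rewrite -leqNgt; apply: ltnW; exact: hom.
- by rewrite h ltnn.
Qed.

Section TTc.
Variables (s' n : nat) (S : tournament s'.+1).
Local Notation s := s'.+1.
Local Notation N := (s * n).
Hypothesis n_gt0 : 0 < n.

Definition wid (x : 'I_n) : 'I_N := widen_ord (leq_pmull n (ltn0Sn s')) x.

Lemma tt_count m t : 'C(n, m) <= #|copyset (TT m) (@GT s' n S t)|.
Proof.
rewrite -[n in 'C(n, _)]card_ord -card_draws.
have winj : injective wid by move=> x y e; apply: val_inj; exact: (f_equal val e).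
rewrite -(card_in_imset (f := fun B : {set 'I_n} => wid @: B)); last by move=> B C _ _; apply: imset_inj.
apply: subset_leq_card; apply/subsetP=> X /imsetP[B]; rewrite inE => /eqP cB ->.
pose w0 : 'I_n := Ordinal n_gt0.
have sz : size (enum B) = m by rewrite -cardE.
pose f := [ffun i : 'I_m => wid (nth w0 (enum B) i)].
have fE (i j : 'I_m) : (val (f i) < val (f j)) = (i < j).
  by rewrite !ffunE /= nth_ltE ?sz.
have finj : injective f.
  move=> i j e; apply: val_inj; case: (ltngtP i j) => // h.
  - by move: (fE i j); rewrite e ltnn h.
  - by move: (fE j i); rewrite e ltnn h.
apply/copysetP; exists f; split=> //.
- apply/eqP; rewrite eqEcard card_imset // cardsT card_ord card_imset // cB leqnn andbT.
  apply/subsetP=> _ /imsetP[i _ ->]; rewrite ffunE; apply: imset_f.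
  by rewrite -mem_enum mem_nth // sz.
- move=> i j; rewrite GT_same /=; first by rewrite fE.
  by rewrite !ffunE /= !divn_small.
Qed.
End TTc.

Lemma ffact_le_exp N k : N ^_ k <= N ^ k.
Proof.
elim: k => [|k IH]; first by rewrite ffactn0 expn0.
by rewrite ffactnSr expnSr leq_mul // leq_subr.
Qed.

Lemma bin_fact_le N k : 'C(N, k) * k`! <= N ^ k.
Proof. by rewrite bin_ffact ffact_le_exp. Qed.


Lemma ffact_ge N k : (N - k) ^ k <= N ^_ k.
Proof.
elim: k => [|k IH]; first by rewrite ffactn0 expn0.
rewrite ffactnSr expnSr leq_mul //; last by rewrite leq_sub2l.
apply: leq_trans IH; case: k => [|k]; first by rewrite !expn0.
by rewrite leq_exp2r // leq_sub2l.
Qed.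

Lemma fact_le_exp m : m`! <= m ^ m.
Proof.
elim: m => [//|m IH]; rewrite factS expnS leq_mul //.
apply: leq_trans IH _; case: m => [|m]; first by rewrite !expn0.
by rewrite leq_exp2r.
Qed.

Lemma bin2_double m : 'C(m, 2) * 2 = m * m.-1.
Proof.
elim: m => [//|m IH]; rewrite binS bin1 mulnDl IH; case: m {IH} => [//|m] /=; by rewrite -mulnDr addn2 mulnC.
Qed.

Lemma lin_exp j : 5 <= j -> 4 * j + 1 < 2 ^ j.
Proof.
elim: j => [//|j IH]; rewrite leq_eqVlt => /orP[/eqP <- //|h].
have := IH h; rewrite expnS.
have : 1 <= 2 ^ j by rewrite expn_gt0.
lia.
Qed.

Lemma ex_m c : exists m, 0 < m /\ c ^ m * m`! < 2 ^ 'C(m, 2).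
Proof.
set j := c + 5; exists (2 ^ j).
set m := 2 ^ j.
have m0 : 0 < m by rewrite expn_gt0.
split=> //.
have cm : c <= m.
  apply: leq_trans (ltnW (ltn_expl c (isT : 1 < 2))) _.
  by rewrite leq_exp2l // leq_addr.
have m4 : m ^ 4 < 2 ^ m.-1.
  rewrite /m -expnM ltn_exp2l //.
  have := lin_exp (leq_addl c 5 : 5 <= j); rewrite -/m; lia.
apply: (@leq_ltn_trans (m ^ m * m ^ m)).
  by rewrite leq_mul ?fact_le_exp // leq_exp2r.
rewrite -(ltn_exp2r _ _ (isT : 0 < 2)).
have -> : (m ^ m * m ^ m) ^ 2 = (m ^ 4) ^ m.
  by rewrite -expnD -!expnM; congr (_ ^ _); lia.
have -> : (2 ^ 'C(m, 2)) ^ 2 = (2 ^ m.-1) ^ m.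
  by rewrite -!expnM bin2_double mulnC.
by rewrite ltn_exp2r.
Qed.

Lemma bin_ratio n s m : 2 * m <= n -> 'C(s * n, m) <= 'C(n, m) * (2 * s) ^ m.
Proof.
move=> h; rewrite -(leq_pmul2r (fact_gt0 m)).
apply: leq_trans (bin_fact_le _ _) _.
rewrite mulnAC bin_ffact.
apply: leq_trans (_ : (2 * s * (n - m)) ^ m <= _).
  by case: m h => [|m] h; rewrite ?expn0 // leq_exp2r //; nia.
by rewrite expnMn mulnC leq_mul // ffact_ge.
Qed.

From Stdlib Require Import Reals Lra.

Definition Pge (rho : R) (f : nat -> R) (t : nat) : bool :=
  if Rle_dec rho (f t) then true else false.

Lemma discrete_ivt (f : nat -> R) (M : nat) (rho delta : R) :
  (f O < rho)%R -> (rho <= f M)%R ->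
  (forall t, Rabs (f t.+1 - f t) <= delta)%R ->
  (Rabs (f (find (Pge rho f) (iota 0 M.+1)) - rho) <= delta)%R.
Proof.
move=> f0 fM fd.
set t := find _ _.
have hs : has (Pge rho f) (iota 0 M.+1).
  apply/hasP; exists M; first by rewrite mem_iota add0n ltnSn.
  by rewrite /Pge; case: Rle_dec => // /(_ fM).
have tl : t < M.+1 by rewrite -[M.+1](size_iota 0) -has_find.
have := nth_find 0 hs; rewrite -/t nth_iota // add0n /Pge.
case: Rle_dec => // ft _.
move: tl ft; case E: t => [|t'] tl ft; first by lra.
have lt' : t' < find (Pge rho f) (iota 0 M.+1) by rewrite -/t E.
have := before_find 0 lt'; rewrite nth_iota ?add0n; last by apply: ltn_trans tl.
rewrite /Pge; case: Rle_dec => // /Rnot_le_lt ft' _.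
have h2 := fd t'; have h1 := Rle_abs (f t'.+1 - f t').
apply: Rabs_le; lra.
Qed.

Lemma le_divR (a b c : R) : (0 < c -> a * c <= b -> a <= b / c)%R.
Proof.
move=> c0 h; apply: (Rmult_le_reg_r c) => //.
have -> : (b / c * c = b)%R by field; lra.
done.
Qed.

Lemma div_leR (a b c : R) : (0 < c -> a <= b * c -> a / c <= b)%R.
Proof.
move=> c0 h; apply: (Rmult_le_reg_r c) => //.
have -> : (a / c * c = a)%R by field; lra.
done.
Qed.

Lemma INR_expn m n : INR (expn m n) = (INR m ^ n)%R.
Proof. elim: n => [//|n IH]. rewrite expnS mult_INR IH /=. ring. Qed.

Lemma INR_pos n : 0 < n -> (0 < INR n)%R.
Proof. by move=> h; apply: lt_0_INR; apply/ltP. Qed.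

Lemma INR_ltn m n : m < n -> (INR m < INR n)%R.
Proof. by move=> h; apply: lt_INR; apply/ltP. Qed.

Lemma INR_leq m n : m <= n -> (INR m <= INR n)%R.
Proof. by move=> h; apply: le_INR; apply/leP. Qed.

Lemma rd_pos m (F : tournament m) : (0 < random_density F)%R.
Proof.
rewrite /random_density; apply: Rmult_lt_0_compat.
  apply: Rdiv_lt_0_compat; apply: INR_pos; [exact: fact_gt0| exact: aut_card_gt0].
apply: Rinv_0_lt_compat; apply: pow_lt; lra.
Qed.

Lemma rd_le m (F : tournament m) : (random_density F <= INR m`! * / 2 ^ 'C(m, 2))%R.
Proof.
rewrite /random_density; apply: Rmult_le_compat_r.
  by apply: Rlt_le; apply: Rinv_0_lt_compat; apply: pow_lt; lra.
apply: div_leR; first by apply: INR_pos; exact: aut_card_gt0.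
have := INR_leq (aut_card_gt0 F); rewrite /= => h.
have := pos_INR (m`!); nra.
Qed.

Theorem proposition4p1 (k : nat) (H : tournament k) :
  ~ transitive_tournament H ->
  (exists (s : nat) (S : tournament s),
      (k < s)%N /\
      (INR (ncopies H S) >= INR s ^ k * / 2 ^ 'C(k, 2))%R) ->
  ~ quasirandom_forcing H.
Proof.
move=> nt [s [S [ks hS]]] qf.
destruct k as [|k'].
  by apply: nt => i; case: i.
destruct s as [|s']; first by [].
pose rho := random_density H.
pose d n t := (INR #|copyset H (@GT s' n S t)| / INR 'C(s'.+1 * n, k'.+1))%R.
pose tsel n := find (Pge rho (d n)) (iota 0 (s'.+1 * n).+1).
pose G n := @GT s' n S (tsel n).
have Hinf : nat_to_infty (fun n => s'.+1 * n).
  by move=> M; exists M => n Mn; apply: leq_trans Mn (leq_pmull _ _).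
have rho_pos : (0 < rho)%R by apply: rd_pos.
have Nk n : 0 < n -> k'.+1 <= s'.+1 * n.
  by move=> n0; apply: leq_trans (ltnW ks) (leq_pmulr _ n0).
have cpos n : 0 < n -> (0 < INR 'C(s'.+1 * n, k'.+1))%R.
  by move=> n0; apply: INR_pos; rewrite bin_gt0 Nk.
have densE n : 0 < n -> density H (G n) = d n (tsel n).
  by move=> n0; rewrite /density ltnNge Nk.
have d0 n : d n 0 = 0%R.
  rewrite /d (copyset_trans0 nt (@GT0 s' n S)) cards0 /=; lra.
have dN n : 0 < n -> (rho <= d n (s'.+1 * n)%nat)%R.
  move=> n0; rewrite /d; apply: le_divR; first exact: cpos.
  have hb : (INR #|copyset H S| * INR n ^ k'.+1 <= INR #|copyset H (@GT s' n S (s'.+1 * n)%nat)|)%R.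
    by have := INR_leq (@blow_count s' n S k'.+1 H); rewrite mult_INR INR_expn.
  have hf : (INR 'C(s'.+1 * n, k'.+1) * INR (k'.+1)`! <= INR s'.+1 ^ k'.+1 * INR n ^ k'.+1)%R.
    have := INR_leq (bin_fact_le (s'.+1 * n) k'.+1).
    by rewrite (mult_INR 'C(_, _)) INR_expn (mult_INR s'.+1 n) Rpow_mult_distr.
  rewrite ncopiesE in hS.
  have hr := rd_le H; rewrite -/rho in hr.
  move: hb hf hS hr.
  set A := INR #|copyset H (GT _ _ _)|; set c := INR 'C(_, _).
  set K := INR _`!; set P := (/ 2 ^ _)%R; set A0 := INR #|copyset H S|.
  set sk := (INR s'.+1 ^ _)%R; set nk := (INR n ^ _)%R => hb hf hS hr.
  have c0 : (0 <= c)%R by apply: pos_INR.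
  have P0 : (0 <= P)%R by apply: Rlt_le; apply: Rinv_0_lt_compat; apply: pow_lt; lra.
  have nk0 : (0 <= nk)%R by apply: pow_le; apply: pos_INR.
  apply: Rle_trans (_ : (K * P * c <= _)%R); first by apply: Rmult_le_compat_r.
  apply: Rle_trans (_ : (sk * nk * P <= _)%R).
    have -> : (K * P * c = c * K * P)%R by ring.
    by apply: Rmult_le_compat_r.
  apply: Rle_trans hb.
  have -> : (sk * nk * P = (sk * P) * nk)%R by ring.
  apply: Rmult_le_compat_r => //; lra.
pose delta n := (INR 'C(s'.+1 * n, k') / INR 'C(s'.+1 * n, k'.+1))%R.
have dstep n t : 0 < n -> (Rabs (d n t.+1 - d n t) <= delta n)%R.
  move=> n0.
  have h1 := step_bound H (G1 := @GT s' n S t) (G2 := @GT s' n S t.+1) (@GT_step s' n S t).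
  have h2 := step_bound H (G1 := @GT s' n S t.+1) (G2 := @GT s' n S t)
     (fun x y hx hy => esym (@GT_step s' n S t x y hx hy)).
  move/INR_leq: h1; move/INR_leq: h2; rewrite !plus_INR => h2 h1.
  have c0 := cpos n n0.
  rewrite /d /delta; apply: Rabs_le.
  have -> : forall a b c : R, (a / c - b / c = (a - b) / c)%R by move=> a b c; rewrite /Rdiv; ring.
  split.
    rewrite -Ropp_div; apply: Rmult_le_compat_r; [apply: Rlt_le; exact: Rinv_0_lt_compat | lra].
  apply: Rmult_le_compat_r; [apply: Rlt_le; exact: Rinv_0_lt_compat | lra].
have dclose n : 0 < n -> (Rabs (d n (tsel n) - rho) <= delta n)%R.
  move=> n0; apply: discrete_ivt; [by rewrite d0 | exact: dN | by move=> t; apply: dstep].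
have conv : Un_cv (fun n => density H (G n)) rho.
  move=> eps eps0.
  have [n1 hn1] := INR_unbounded (INR k'.+1 / eps).
  exists (n1 + k'.+1)%nat => n /leP hn.
  have n0 : 0 < n by lia.
  rewrite /R_dist densE //.
  apply: Rle_lt_trans (dclose n n0) _.
  have e := INR_leq (eq_leq (mul_bin_left (s'.+1 * n) k')).
  have e' := INR_leq (eq_leq (esym (mul_bin_left (s'.+1 * n) k'))).
  rewrite !mult_INR in e e'.
  have hD : n1.+1 <= s'.+1 * n - k'.
    by apply: leq_trans (_ : n - k' <= _); [lia | apply: leq_sub2r; apply: leq_pmull].
  have hD' := INR_leq hD; rewrite S_INR in hD'.
  have c0 := cpos n n0.
  rewrite /delta; move: e e' hD' c0 hn1.
  set c := INR 'C(_, k'.+1); set c' := INR 'C(_, k'); set D := INR (_ - k').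
  set K := INR k'.+1 => e e' hD' c0 hn1.
  have K0 : (0 < K)%R by apply: INR_pos.
  have hK : (K < eps * INR n1)%R.
    have : (K / eps * eps < INR n1 * eps)%R by apply: Rmult_lt_compat_r.
    have -> : (K / eps * eps = K)%R by field; lra.
    lra.
  have D0 : (0 < D)%R by have := pos_INR n1; lra.
  have -> : (c' / c = K / D)%R.
    have eq : (K * c = D * c')%R by lra.
    have -> : c' = (K * c / D)%R by rewrite eq; field; lra.
    field; lra.
  apply: (Rmult_lt_reg_r D) => //.
  have -> : (K / D * D = K)%R by field; lra.
  nra.
have qr := qf _ G Hinf conv.
have [m [m0 hm]] := ex_m (2 * s'.+1).
have := qr m (TT m).
set rF := random_density (TT m).
set Q := INR (expn (2 * s'.+1) m).
have Q0 : (0 < Q)%R by apply: INR_pos; rewrite expn_gt0 muln_gt0.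
have hrF : (rF < / Q)%R.
  have := rd_le (TT m); rewrite -/rF => h; apply: Rle_lt_trans h _.
  have := INR_ltn hm; rewrite mult_INR -/Q (INR_expn 2).
  have -> : INR 2 = 2%R by simpl; ring.
  move=> hm'.
  have P0 : (0 < 2 ^ 'C(m, 2))%R by apply: pow_lt; lra.
  apply: (Rmult_lt_reg_r (Q * 2 ^ 'C(m, 2))); first by apply: Rmult_lt_0_compat.
  have -> : (/ Q * (Q * 2 ^ 'C(m, 2)) = 2 ^ 'C(m, 2))%R by field; lra.
  have -> : (INR m`! * / 2 ^ 'C(m, 2) * (Q * 2 ^ 'C(m, 2)) = Q * INR m`!)%R by field; lra.
  done.
move=> /(_ (/ Q - rF)%R) [|n0 hn0]; first lra.
pose n := (n0 + 2 * m + 1)%nat.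
have := hn0 n (leP (leq_trans (leq_addr _ _) (leq_addr _ _))).
rewrite /R_dist.
have npos : 0 < n by rewrite /n addn1.
have mn : m <= n by rewrite /n; lia.
have Nm : m <= s'.+1 * n by apply: leq_trans mn (leq_pmull _ _).
have cN : (0 < INR 'C(s'.+1 * n, m))%R by apply: INR_pos; rewrite bin_gt0.
have hdens : (/ Q <= density (TT m) (G n))%R.
  rewrite /density ltnNge Nm /= ncopiesE.
  have h1 := INR_leq (tt_count S npos m (tsel n)).
  have h2m : 2 * m <= n by rewrite /n; lia.
  have h2 := INR_leq (bin_ratio s'.+1 h2m).
  rewrite mult_INR in h2.
  apply: le_divR => //.
  apply: Rle_trans h1.
  apply: (Rmult_le_reg_r Q) => //.
  have -> : (/ Q * INR 'C(s'.+1 * n, m) * Q = INR 'C(s'.+1 * n, m))%R by field; lra.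
  exact: h2.
have := Rle_abs (density (TT m) (G n) - rF); lra.
Qed.
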